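(* Let $q$ be a power of $2$ and let $\alpha,\beta \in \mathbb{F}_{q^2}$ be such that the line $\{(\alpha t+\beta, t)\}$ is not tangent to the Hermitian curve $x^q+x=y^{q+1}$. Let $\gamma = \beta+\beta^q$, let $\sigma_0,\dots,\sigma_q$ be the roots of $p(t) = t^{q+1} + \alpha^q t^q + \alpha t + \gamma$, and $P_k = \sum_{i=0}^q \sigma_i^k$. Then for all $0 \leq k < q$, $P_k = \alpha^{qk}$ and $P_{kq} = \alpha^k$. *)

(* Defs.v *)
From HB Require Import structures.
From mathcomp Require Import all_boot all_order all_algebra.
Set Implicit Arguments. Unset Strict Implicit. Unset Printing Implicit Defensive.
Import Order.TTheory GRing.Theory Num.Theory.
Local Open Scope ring_scope.

Section Hermitian.
Variable L : fieldType.

Definition in_Fq2 (q : nat) (a : L) : Prop := a ^+ (q ^ 2) = a.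

Definition herm_F (q : nat) (x y : L) : L := x ^+ q + x - y ^+ q.+1.
Definition herm_Fx (q : nat) (x y : L) : L := q%:R * x ^+ q.-1 + 1.
Definition herm_Fy (q : nat) (x y : L) : L := - (q.+1)%:R * y ^+ q.

(* The line t |-> (alpha t + beta, t), with direction vector (alpha, 1),
   is tangent to H at some point (over L) of the intersection. *)
Definition line_tangent_herm (q : nat) (alpha beta : L) : Prop :=
  exists t0 : L,
    herm_F q (alpha * t0 + beta) t0 = 0 /\
    alpha * herm_Fx q (alpha * t0 + beta) t0 + 1 * herm_Fy q (alpha * t0 + beta) t0 = 0.

Definition herm_poly (q : nat) (alpha gamma : L) : {poly L} :=
  'X ^+ q.+1 + (alpha ^+ q)%:P * 'X ^+ q + alpha%:P * 'X + gamma%:P.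

Definition power_sum (s : seq L) (k : nat) : L := \sum_(x <- s) x ^+ k.
End Hermitian.

(* Main.v *)
Require Import Defs.
From HB Require Import structures.
From mathcomp Require Import all_boot all_order all_algebra.
From mathcomp Require Import ring zify.
Import GRing.Theory.
Local Open Scope ring_scope.
Lemma deriv_prod_sum (L : fieldType) (s : seq L) (Q : L -> {poly L}) :
  (forall x, x \in s -> ('X - x%:P) * Q x = \prod_(y <- s) ('X - y%:P)) ->
  \sum_(x <- s) Q x = (\prod_(y <- s) ('X - y%:P))^`().
Proof.
elim: s Q => [|a s IH] Q HQ; first by rewrite !big_nil derivC.
rewrite !big_cons derivM derivXsubC mul1r.
have nz (x : L) : 'X - x%:P != 0 by rewrite polyXsubC_eq0.
have Qa : Q a = \prod_(y <- s) ('X - y%:P).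
  apply: (mulfI (nz a)); rewrite /=; rewrite HQ ?mem_head // big_cons //.
set ps := \prod_(y <- s) _ in Qa *.
have HR : forall x, x \in s -> Q x = ('X - a%:P) * (ps %/ ('X - x%:P)).
  move=> x xs; apply: (mulfI (nz x)); rewrite /=.
  rewrite HQ ?inE ?xs ?orbT // big_cons -/ps mulrCA divpKC //.
  by rewrite dvdp_XsubCl root_prod_XsubC.
rewrite Qa; congr (_ + _).
rewrite (eq_big_seq _ HR) -mulr_sumr IH //.
by move=> x xs; rewrite divpKC // dvdp_XsubCl root_prod_XsubC.
Qed.

Lemma sum_ind (L : fieldType) (n k : nat) (P : nat -> bool) (F : nat -> L) :
  (forall i, (i < n)%N -> P i = (i == k)) ->
  \sum_(i < n) F i * (P i)%:R = if (k < n)%N then F k else 0.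
Proof.
move=> HP.
rewrite (eq_bigr (fun i : 'I_n => if (i == k :> nat) then F i else 0)).
  by rewrite -big_mkcond big_ord1_eq.
by move=> i _; rewrite HP //; case: (_ == _); rewrite ?mulr1 ?mulr0.
Qed.

Lemma sum_expq (L : fieldType) (m : nat) (s : seq L) (f : L -> L) :
  2%N \in [pchar L] -> (0 < m)%N ->
  (\sum_(x <- s) f x) ^+ (2 ^ m) = \sum_(x <- s) (f x) ^+ (2 ^ m).
Proof.
move=> ch m0; elim: s => [|a s IH]; first by rewrite !big_nil expr0n expn_eq0.
rewrite !big_cons exprDn_pchar ?IH //.
by rewrite pnatX (pnatE _ (isT : prime 2)) ch.
Qed.

Lemma sum_ind2 (L : fieldType) (n k : nat) (F : nat -> L) :
  \sum_(i < n) ((i : nat) == k)%:R * F i = if (k < n)%N then F k else 0.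
Proof.
rewrite (eq_bigr (fun i : 'I_n => if (i == k :> nat) then F i else 0)).
  by rewrite -big_mkcond big_ord1_eq.
by move=> i _; case: (_ == _); rewrite ?mul1r ?mul0r.
Qed.

Theorem mainTheorem5 (L : fieldType) (m : nat) (alpha beta : L)
    (s : seq L) :
  2%N \in [pchar L] -> (0 < m)%N ->
  let q := (2 ^ m)%N in
  in_Fq2 q alpha -> in_Fq2 q beta ->
  ~ line_tangent_herm q alpha beta ->
  let gamma := beta + beta ^+ q in
  herm_poly q alpha gamma = \prod_(sigma <- s) ('X - sigma%:P) ->
  forall k : nat, (k < q)%N ->
    power_sum s k = alpha ^+ (q * k) /\ power_sum s (k * q) = alpha ^+ k.
Proof.
move=> ch m0 q aq _ _ gamma Hp.
have two0 : (2%:R : L) = 0 := pcharf0 ch.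
have q0 : (q%:R : L) = 0 by rewrite /q natrX two0 expr0n eqn0Ngt m0.
have q1 : (q.+1%:R : L) = 1 by rewrite -addn1 natrD q0 add0r.
have qgt0 : (0 < q)%N by rewrite /q expn_gt0.
have oppE (x : L) : - x = x.
  by apply/eqP; rewrite eq_sym -subr_eq0 opprK -mulr2n -mulr_natr two0 mulr0.
pose Q (x : L) : {poly L} := \sum_(i < q.+1) 'X^(q.+1.-1 - i) * x%:P ^+ i
   + (alpha ^+ q)%:P * \sum_(i < q) 'X^(q.-1 - i) * x%:P ^+ i + alpha%:P.
have HQ x : x \in s -> ('X - x%:P) * Q x = \prod_(y <- s) ('X - y%:P).
  move=> xs.
  have r0 : (herm_poly q alpha gamma).[x] = 0.
    by apply/eqP; rewrite -/(root _ x) Hp root_prod_XsubC.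
  rewrite -Hp -[RHS]subr0 -polyC0 -r0 /herm_poly /Q !hornerE.
  rewrite !mulrDr mulrCA -!subrXX.
  rewrite ?(rmorphD, rmorphM, rmorphXn).
  ring.
have cQ x k : (k < q)%N -> (Q x)`_(q - k) =
    x ^+ k + (if k is k'.+1 then alpha ^+ q * x ^+ k' else 0).
  move=> kq; rewrite /Q !coefD coefCM !coef_sum coefC.
  under eq_bigr => i _ do rewrite -rmorphXn coefMC coefXn.
  under [X in _ + _ * X + _]eq_bigr => i _ do rewrite -rmorphXn coefMC coefXn.
  rewrite (eq_bigr (fun i : 'I_q.+1 => ((i : nat) == k)%:R * x ^+ i)); last first.
    move=> i _; congr (_%:R * _); have := ltn_ord i; move=> ?; do 2 case: eqP => ? //; exfalso; lia.
  rewrite sum_ind2 ltnS ltnW //.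
  have -> : (q - k == 0)%N = false by apply/negbTE/eqP; lia.
  rewrite addr0; congr (_ + _).
  case: k kq => [|k] kq.
    rewrite big1 ?mulr0 // => i _; have := ltn_ord i; move=> ?.
    have -> : (q - 0 == q.-1 - i)%N = false by apply/negbTE/eqP; lia.
    by rewrite mul0r.
  rewrite (eq_bigr (fun i : 'I_q => ((i : nat) == k)%:R * x ^+ i)); last first.
    move=> i _; congr (_%:R * _); have := ltn_ord i; move=> ?; do 2 case: eqP => ? //; exfalso; lia.
  by rewrite sum_ind2 (ltnW kq).
have D := @deriv_prod_sum L s Q HQ; rewrite -Hp in D.
have key k : (k < q)%N -> power_sum s k +
    (if k is k'.+1 then alpha ^+ q * power_sum s k' else 0) =
    (if k == 0%N then 1 else 0).
  move=> kq; have := congr1 (fun p : {poly L} => p`_(q - k)) D => /=.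
  rewrite coef_sum coef_deriv.
  under eq_bigr => x _ do rewrite cQ //.
  rewrite /power_sum big_split /= => E.
  case: k kq E => [|k] kq E.
    rewrite big1_eq addr0 in E; rewrite ?addr0 E /=.
    rewrite /herm_poly !coefD coefXn coefCM coefXn coefCM coefX coefC.
    rewrite subn0 eqxx.
    have -> : (q.+1 == q)%N = false by apply/negbTE/eqP; lia.
    have -> : (q.+1 == 1)%N = false by apply/negbTE/eqP; lia.
    by rewrite !mulr0 !addr0.
  rewrite -mulr_sumr in E; rewrite E /=.
  rewrite /herm_poly !coefD coefXn coefCM coefXn coefCM coefX coefC.
  have -> : ((q - k.+1).+1 == q.+1)%N = false by apply/negbTE/eqP; lia.
  have -> : ((q - k.+1).+1 == 1)%N = false by apply/negbTE/eqP; lia.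
  rewrite !mulr0 add0r !addr0.
  case: (boolP (k == 0)%N) => [/eqP k0 | k0].
    subst k; rewrite subn1 prednK // eqxx mulr1 -mulr_natr q0 mulr0 //.
  have -> : ((q - k.+1).+1 == q)%N = false by apply/negbTE/eqP; lia.
  by rewrite mulr0 mul0rn.
have PS k : (k < q)%N -> power_sum s k = alpha ^+ (q * k).
  elim: k => [|k IH] kq.
    by have := key 0%N qgt0; rewrite addr0 muln0 expr0.
  have := key k.+1 kq; rewrite /= IH ?(ltnW kq) // => /eqP.
  rewrite addr_eq0 => /eqP ->; rewrite oppE -exprD mulnS //.
move=> k kq; split; first exact: PS.
rewrite /power_sum.
under eq_bigr => x _ do rewrite exprM.
rewrite -sum_expq // -/(power_sum s k) PS // -exprM.
rewrite mulnC mulnA mulnn exprM.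
by rewrite (aq : alpha ^+ (q ^ 2) = alpha).
Qed.
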